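(* An element $b=\sum_{i=0}^{k-1}b_iz^i\in B_k$ stabilizes $dT$ under the coadjoint action if and only if $b_i\in\mathfrak{h}_i$ for all $i=1,\dots,k-1$.
   Context: Let $\mathfrak{g}=\mathfrak{gl}_n(\mathbb{C})$, $\mathfrak{t}$ a Cartan subalgebra, $k>1$, $T=\sum_{i=1}^{k-1}T_iz^{-i}$, $T_i\in\mathfrak{t}$, $T_{k-1}\ne0$, $dT=\sum_{i=1}^{k-1}(-iT_i)z^{-i-1}dz$. $B_k=\{\sum_{i=0}^{k-1}b_iz^i:b_0=1,b_i\in\mathfrak{g}\}\subset\mathrm{GL}_n(\mathbb{C}[z]/(z^k))$; identify $\mathfrak{b}_k^*$ with $\{\sum_{i=1}^{k-1}X_iz^{-i-1}dz:X_i\in\mathfrak{g}\}$ via $\mathrm{res}_{z=0}\mathrm{tr}$; the coadjoint action is $\mathrm{Ad}^*_bB=$ the part of $bBb^{-1}$ in degrees $z^{-i-1}dz$, $1\le i\le k-1$. For $i=0,\dots,k-2$ put $\mathfrak{h}_i=\bigcap_{j=i+1}^{k-1}\ker\mathrm{ad}_{T_j}$, and $\mathfrak{h}_{k-1}=\mathfrak{g}$. *)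

(* Defs.v *)
From HB Require Import structures.
From mathcomp Require Import all_boot all_order all_algebra.
From mathcomp Require Import complex.
From mathcomp Require Import reals.
Set Implicit Arguments. Unset Strict Implicit. Unset Printing Implicit Defensive.
Import Order.TTheory GRing.Theory Num.Theory.
Local Open Scope ring_scope.

Section Defs.
Variables (R : realType) (n : nat).
Local Notation C := (R[i]).
Local Notation M := 'M[C]_n.

(* Coefficients b_0, b_1, ... of an element of B_k; only b_0..b_{k-1} matter. *)
(* Inverse of b in GL_n(C[z]/(z^k)) (when b_0 = 1): coefficients c_0, c_1, ...
   determined by  sum_{p+q=m} b_p c_q = delta_{m,0}. *)
Fixpoint tinv_seq (b : nat -> M) (m : nat) : seq M :=
  match m with
  | 0 => [:: 1%:M]
  | m'.+1 => let s := tinv_seq b m' in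
             rcons s (- \sum_(1 <= p < m'.+2) b p *m nth 0 s (m'.+1 - p))
  end.
Definition tinv (b : nat -> M) (q : nat) : M := nth 0 (tinv_seq b q) q.

(* dT = sum_{i=1}^{k-1} (-i T_i) z^{-i-1} dz : coefficient of z^{-i-1} dz *)
Definition dT (T : nat -> M) (i : nat) : M := - (i%:R *: T i).

(* coefficient of z^{-j-1} dz (1 <= j <= k-1) of Ad*_b B = part of b B b^{-1},
   where B = sum_{i=1}^{k-1} X_i z^{-i-1} dz. *)
Definition coad (k : nat) (b : nat -> M) (X : nat -> M) (j : nat) : M :=
  \sum_(1 <= i < k | (j <= i)%N)
     \sum_(p < (i - j).+1) b p *m X i *m tinv b (i - j - p).

Definition stabilizes (k : nat) (b : nat -> M) (B : nat -> M) : Prop :=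
  forall j, (1 <= j < k)%N -> coad k b B j = B j.

(* h_i = intersection over j = i+1..k-1 of ker ad_{T_j}; for i = k-1 this is g *)
Definition h_ (k : nat) (T : nat -> M) (i : nat) (X : M) : Prop :=
  forall j, (i < j < k)%N -> X *m T j - T j *m X = 0.

(* X belongs to the Cartan subalgebra t = P (diagonal matrices) P^{-1} *)
Definition in_cartan (P : M) (X : M) : Prop := is_diag_mx (invmx P *m X *m P).

End Defs.

(* Main.v *)
Require Import Defs.
From HB Require Import structures.
From mathcomp Require Import all_boot all_order all_algebra.
From mathcomp Require Import complex.
From mathcomp Require Import reals.
From mathcomp Require Import zify ring.
Import Order.TTheory GRing.Theory Num.Theory.
Local Open Scope ring_scope.

Lemma size_tinv_seq (R : realType) n (b : nat -> 'M[R[i]]_n) m :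
  size (tinv_seq b m) = m.+1.
Proof. by elim: m => [|m IH] //=; rewrite size_rcons IH. Qed.

Lemma nth_tinv_seq (R : realType) n (b : nat -> 'M[R[i]]_n) m q :
  (q <= m)%N -> nth 0 (tinv_seq b m) q = tinv b q.
Proof.
elim: m q => [|m IH] q hq.
  by move: hq; rewrite leqn0 => /eqP ->.
case: (ltnP q m.+1) => hq'.
  by rewrite /= nth_rcons size_tinv_seq hq' IH.
have -> : q = m.+1 by apply/eqP; rewrite eqn_leq hq hq'.
by [].
Qed.

Lemma tinv0 (R : realType) n (b : nat -> 'M[R[i]]_n) : tinv b 0 = 1%:M.
Proof. by []. Qed.

Lemma tinvS (R : realType) n (b : nat -> 'M[R[i]]_n) m :
  tinv b m.+1 = - \sum_(1 <= p < m.+2) b p *m tinv b (m.+1 - p).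
Proof.
rewrite /tinv /= nth_rcons size_tinv_seq ltnn eqxx; congr (- _).
apply: eq_big_nat => p /andP[h1 h2]; rewrite nth_tinv_seq //.
lia.
Qed.

Lemma conv_tinv (R : realType) n (b : nat -> 'M[R[i]]_n) s :
  b 0%N = 1%:M ->
  \sum_(p < s.+1) b p *m tinv b (s - p) = if s == 0%N then 1%:M else 0.
Proof.
move=> b0; case: s => [|s]; first by rewrite big_ord1 b0 mul1mx.
rewrite -(big_mkord xpredT (fun p => b p *m tinv b (s.+1 - p))).
rewrite big_ltn // b0 mul1mx subn0 tinvS /=.
by rewrite addNr.
Qed.

Lemma scal (F : idomainType) (be d : nat -> F) k :
  (forall j, be 0%N * d j = 0) ->
  (forall l, (1 <= l < k)%N -> \sum_(p < k - l) be p * d (l + p)%N = 0) ->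
  forall i j, (1 <= i)%N -> (i < j < k)%N -> be i * d j = 0.
Proof.
move=> h0 hE i j hi /andP[hij hjk].
have [dj0|djn0] := eqVneq (d j) 0; first by rewrite dj0 mulr0.
pose P := fun m => (m < k)%N && (d m != 0).
have exP : exists m, P m by exists j; rewrite /P hjk djn0.
have ubP : forall m, P m -> (m <= k)%N by move=> m /andP[/ltnW].
case: (ex_maxnP exP ubP) => m0 /andP[hm0k dm0] maxm0.
have jm0 : (j <= m0)%N by apply: maxm0; rewrite /P hjk djn0.
suff: forall p, (1 <= p < m0)%N -> be p = 0.
  by move=> H; rewrite H ?mul0r //; lia.
move=> p; have [N] := ubnP p; elim: N p => [|N IHN] p //= hpN hp.
have hl : (1 <= m0 - p < k)%N by lia.
have := hE _ hl.
have hpK : (p < k - (m0 - p))%N by lia.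
rewrite (bigD1 (Ordinal hpK)) //= big1 ?addr0.
  have -> : (m0 - p + p = m0)%N by lia.
  by move/eqP; rewrite mulf_eq0 (negPf dm0) orbF => /eqP.
move=> q /= hq.
have hq' : q != p :> nat by [].
case: (ltnP q p) => hqp.
  case: (posnP q) => [q0|qpos]; first by rewrite q0 h0.
  by rewrite IHN ?mul0r //; lia.
have : ~~ P (m0 - p + q)%N.
  apply/negP => /maxm0; lia.
rewrite /P negb_and negbK => /orP[|/eqP ->]; last by rewrite mulr0.
have := ltn_ord q; lia.
Qed.
Lemma exch (V : zmodType) (H : nat -> nat -> V) K :
  \sum_(m < K) \sum_(p < K - m) H p m = \sum_(s < K) \sum_(p < s.+1) H p (s - p)%N.
Proof.
elim: K => [|K IH]; first by rewrite !big_ord0.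
rewrite [RHS]big_ord_recr /= -IH.
have -> : \sum_(m < K.+1) \sum_(p < K.+1 - m) H p m =
   \sum_(m < K.+1) (\sum_(p < K - m) H p m + H (K - m)%N m).
  apply: eq_bigr => m _; have hm := ltn_ord m.
  by rewrite subSn -1?ltnS // big_ord_recr.
rewrite big_split /= big_ord_recr /= subnn big_ord0 addr0; congr (_ + _).
rewrite (reindex_inj rev_ord_inj) /=; apply: eq_bigr => m _.
have hm := ltn_ord m.
have -> : (K - (K.+1 - m.+1) = m)%N by lia.
by rewrite subSS.
Qed.

Definition Ecomm {R : realType} {n} k (b X : nat -> 'M[R[i]]_n) (l : nat) :=
  \sum_(p < k - l) (b p *m X (l + p)%N - X (l + p)%N *m b p).

Lemma coad_id (R : realType) n k (b X : nat -> 'M[R[i]]_n) j :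
  b 0%N = 1%:M -> (1 <= j < k)%N ->
  coad k b X j - X j = \sum_(m < k - j) Ecomm k b X (j + m) *m tinv b m.
Proof.
move=> b0 /andP[hj1 hjk].
have -> : \sum_(m < k - j) Ecomm k b X (j + m) *m tinv b m =
  \sum_(m < k - j) \sum_(p < (k - j) - m)
     ((b p *m X (j + m + p)%N - X (j + m + p)%N *m b p) *m tinv b m).
  by apply: eq_bigr => m _; rewrite /Ecomm subnDA mulmx_suml.
rewrite (@exch _ (fun p m => (b p *m X (j + m + p)%N - X (j + m + p)%N *m b p) *m tinv b m)).
have -> : \sum_(s < k - j) \sum_(p < s.+1)
     ((b p *m X (j + (s - p) + p)%N - X (j + (s - p) + p)%N *m b p) *m tinv b (s - p)%N)
  = \sum_(s < k - j) \sum_(p < s.+1) (b p *m X (j + s)%N *m tinv b (s - p)%N)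
    - \sum_(s < k - j) X (j + s)%N *m \sum_(p < s.+1) (b p *m tinv b (s - p)%N).
  rewrite -sumrB; apply: eq_bigr => s _.
  rewrite mulmx_sumr -sumrB; apply: eq_bigr => p _.
  have hp := ltn_ord p.
  have -> : (j + (s - p) + p = j + s)%N by lia.
  by rewrite mulmxBl !mulmxA.
have -> : \sum_(s < k - j) X (j + s)%N *m \sum_(p < s.+1) (b p *m tinv b (s - p)%N)
   = X j.
  have -> : (k - j = (k - j).-1.+1)%N by lia.
  rewrite big_ord_recl [X in _ + X]big1 ?addr0.
    by rewrite /= (@conv_tinv _ _ b 0 b0) addn0 mulmx1.
  by move=> s _; rewrite (@conv_tinv _ _ b _ b0) /= mulmx0.
congr (_ - _).
rewrite /coad big_mkcond.
rewrite (big_cat_nat _ (n := j)) //=; last by lia.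
rewrite big_nat_cond big1 ?add0r; last first.
  by move=> i /andP[/andP[_ hi] _]; rewrite leqNgt hi.
rewrite -{1}(add0n j) big_addn big_mkord; apply: eq_bigr => s _.
rewrite leq_addl addnK addnC; apply: eq_bigr => p _.
by [].
Qed.

Lemma stab_iff (R : realType) n k (b X : nat -> 'M[R[i]]_n) :
  b 0%N = 1%:M ->
  stabilizes k b X <-> (forall l, (1 <= l < k)%N -> Ecomm k b X l = 0).
Proof.
move=> b0; split => [hs | hE j hj].
  suff H : forall t l, (1 <= l < k)%N -> (k - l < t)%N -> Ecomm k b X l = 0.
    by move=> l hl; apply: (H (k - l).+1).
  elim=> [|t IH] l hl ht //.
  have := @coad_id _ _ k b X l b0 hl; rewrite hs // subrr.
  have -> : (k - l = (k - l).-1.+1)%N by lia.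
  rewrite big_ord_recl /= [X in _ + X]big1 ?addr0 ?addn0.
    by rewrite tinv0 mulmx1 => /esym.
  move=> m _; have hm := ltn_ord m; rewrite IH ?mul0mx //; rewrite /bump leq0n add1n; lia.
apply/eqP; rewrite -subr_eq0; apply/eqP.
rewrite (@coad_id _ _ k b X j b0 hj) big1 // => m _.
by rewrite hE ?mul0mx //; have := ltn_ord m; lia.
Qed.

Lemma conjM (F : fieldType) n (P A B : 'M[F]_n) : P \in unitmx ->
  invmx P *m (A *m B) *m P = (invmx P *m A *m P) *m (invmx P *m B *m P).
Proof. by move=> hP; rewrite !mulmxA -(mulmxA _ P) mulmxV // mulmx1. Qed.

Lemma conj_eq0 (F : fieldType) n (P A : 'M[F]_n) : P \in unitmx ->
  invmx P *m A *m P = 0 -> A = 0.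
Proof.
move=> hP h.
have <- : P *m (invmx P *m A *m P) *m invmx P = A.
  by rewrite !mulmxA mulmxV // mul1mx -mulmxA mulmxV // mulmx1.
by rewrite h mulmx0 mul0mx.
Qed.

Lemma mul_diagr (F : fieldType) n (A D : 'M[F]_n) a c :
  is_diag_mx D -> (A *m D) a c = A a c * D c c.
Proof.
move/is_diag_mxP=> hD; rewrite mxE (bigD1 c) //= big1 ?addr0 // => i hi.
by rewrite (hD _ _ hi) mulr0.
Qed.

Lemma mul_diagl (F : fieldType) n (A D : 'M[F]_n) a c :
  is_diag_mx D -> (D *m A) a c = D a a * A a c.
Proof.
move/is_diag_mxP=> hD; rewrite mxE (bigD1 a) //= big1 ?addr0 // => i hi.
by rewrite (hD a i) ?mul0r // eq_sym.
Qed.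

Lemma mxBE (F : fieldType) n (A B : 'M[F]_n) a c : (A - B) a c = A a c - B a c.
Proof. by rewrite !mxE. Qed.

Lemma mx0E (F : fieldType) n a c : (0 : 'M[F]_n) a c = 0.
Proof. by rewrite !mxE. Qed.

Lemma mxNZE (F : fieldType) n (D : 'M[F]_n) s a c : (- (s *: D)) a c = - (s * D a c).
Proof. by rewrite !mxE. Qed.

Lemma comm_dT (R : realType) n (T : nat -> 'M[R[i]]_n) (B : 'M[R[i]]_n) m :
  B *m dT T m - dT T m *m B = - (m%:R *: (B *m T m - T m *m B)).
Proof.
rewrite /dT mulmxN mulNmx opprK -scalemxAr -scalemxAl scalerBr opprB addrC.
by [].
Qed.

Lemma conj_dT (R : realType) n (P : 'M[R[i]]_n) (T : nat -> 'M[R[i]]_n) m :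
  invmx P *m dT T m *m P = - (m%:R *: (invmx P *m T m *m P)).
Proof. by rewrite /dT mulmxN mulNmx -scalemxAr -scalemxAl. Qed.

Lemma diag_NZ (F : fieldType) n (D : 'M[F]_n) s :
  is_diag_mx D -> is_diag_mx (- (s *: D)).
Proof.
move/is_diag_mxP=> hD; apply/is_diag_mxP => a c ne.
by rewrite mxNZE hD // mulr0 oppr0.
Qed.

Lemma natC_neq0 (R : realType) m : (0 < m)%N -> (m%:R : R[i]) != 0.
Proof. by move=> hm; rewrite pnatr_eq0 -lt0n. Qed.

Theorem lemma3p4 (R : realType) (n k : nat) (P : 'M[R[i]]_n)
    (T : nat -> 'M[R[i]]_n) :
  (1 < k)%N ->
  P \in unitmx ->
  (forall i, (1 <= i < k)%N -> in_cartan P (T i)) ->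
  T k.-1 != 0 ->
  forall b : nat -> 'M[R[i]]_n, b 0%N = 1%:M ->
  (stabilizes k b (dT T) <-> (forall i, (1 <= i < k)%N -> h_ k T i (b i))).
Proof.
move=> hk hP hT _ b b0.
split; last first.
  move=> hh; apply/(@stab_iff _ _ k b (dT T) b0) => l /andP[hl1 hlk].
  rewrite /Ecomm big1 // => p _.
  case: (posnP p) => [->|hp].
    by rewrite b0 mul1mx mulmx1 subrr.
  have hpl := ltn_ord p.
  rewrite comm_dT (hh p) ?scaler0 ?oppr0 //; lia.
move/(@stab_iff _ _ k b (dT T) b0) => hE i /andP[hi1 hik] j /andP[hij hjk].
apply: (@conj_eq0 _ _ P (b i *m T j - T j *m b i) hP).
rewrite mulmxBr mulmxBl !conjM //.
set Q := invmx P.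
have dg : forall m, (1 <= m < k)%N -> is_diag_mx (Q *m T m *m P).
  by move=> m hm; apply: hT.
have dgX : forall m, (1 <= m < k)%N -> is_diag_mx (Q *m dT T m *m P).
  by move=> m hm; rewrite conj_dT; apply: diag_NZ; apply: dg.
apply/matrixP => a c.
have dTj : is_diag_mx (Q *m T j *m P) by apply: dg; lia.
rewrite mxBE mx0E (@mul_diagr _ _ (Q *m b i *m P) _ a c dTj).
rewrite (@mul_diagl _ _ (Q *m b i *m P) _ a c dTj).
pose be p := (Q *m b p *m P) a c.
pose d m := (Q *m dT T m *m P) c c - (Q *m dT T m *m P) a a.
have h0 : forall m, be 0%N * d m = 0.
  move=> m; rewrite /be b0 mulmx1 mulVmx // mxE.
  case: (eqVneq a c) => [eac|ne]; first by rewrite /d eac subrr mulr0.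
  by rewrite mul0r.
have hE' : forall l, (1 <= l < k)%N -> \sum_(p < k - l) be p * d (l + p)%N = 0.
  move=> l hl; have := hE l hl; move/(congr1 (fun A => (Q *m A *m P) a c)).
  rewrite /Ecomm mulmx_sumr mulmx_suml summxE mulmx0 mul0mx mx0E => H; rewrite -[X in _ = X]H.
  apply: eq_bigr => p _.
  have hp := ltn_ord p.
  have hX : is_diag_mx (Q *m dT T (l + p) *m P) by apply: dgX; lia.
  rewrite mulmxBr mulmxBl !conjM // mxBE.
  rewrite (@mul_diagr _ _ (Q *m b p *m P) _ a c hX).
  rewrite (@mul_diagl _ _ (Q *m b p *m P) _ a c hX).
  by rewrite /be /d mulrBr; congr (_ - _); exact: mulrC.
have := @scal _ be d k h0 hE' i j hi1 (introT andP (conj hij hjk)).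
rewrite /be /d !conj_dT !mxNZE.
set x := (Q *m b i *m P) a c.
set tc := (Q *m T j *m P) c c.
set ta := (Q *m T j *m P) a a.
have -> : x * (- ((j%:R) * tc) - - ((j%:R) * ta)) = - (j%:R) * (x * tc - ta * x).
  by ring.
have jn0 : (j%:R : R[i]) != 0 by apply: natC_neq0; lia.
move/eqP; rewrite mulf_eq0 oppr_eq0 (negPf jn0) /=.
by move/eqP.
Qed.
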